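(* Let $1\leq\alpha\leq\theta<\omega_1$ and let $X,Y$ be $\mathbf{\Sigma}^0_\alpha$-isomorphic topological spaces. If the difference hierarchy $\{D_\beta(\mathbf{\Sigma}^0_\theta(X))\}_{\beta<\omega_1}$ does not collapse, then the difference hierarchy $\{D_\beta(\mathbf{\Sigma}^0_\theta(Y))\}_{\beta<\omega_1}$ does not collapse.
   Context: For a space $X$: $\mathbf{\Sigma}^0_0(X)=\{\emptyset\}$; $\mathbf{\Sigma}^0_1(X)$ the open sets; $\mathbf{\Sigma}^0_2(X)$ the countable unions of sets $U\setminus V$ with $U,V$ open; for $2<\alpha<\omega_1$, $\mathbf{\Sigma}^0_\alpha(X)$ the countable unions of complements of sets in $\bigcup_{\beta<\alpha}\mathbf{\Sigma}^0_\beta(X)$. An ordinal $\alpha=\lambda+n$ ($\lambda$ zero or limit, $n<\omega$) is even if $n$ is even and odd otherwise; $r(\alpha)=0$ if $\alpha$ is even, $1$ otherwise. $D_\beta(\{A_\gamma\}_{\gamma<\beta})=\bigcup\{A_\gamma\setminus\bigcup_{\delta<\gamma}A_\delta\mid\gamma<\beta,\ r(\gamma)\neq r(\beta)\}$, and $D_\beta(\mathcal{L})$ is the set of all such sets with all $A_\gamma\in\mathcal{L}$. The difference hierarchy $\{D_\beta(\mathbf{\Sigma}^0_\theta(X))\}_{\beta<\omega_1}$ collapses if for some $\beta<\omega_1$ the class $D_\beta(\mathbf{\Sigma}^0_\theta(X))$ coincides with the class of complements $\{X\setminus A\mid A\in D_\beta(\mathbf{\Sigma}^0_\theta(X))\}$.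 $X$ and $Y$ are $\mathbf{\Sigma}^0_\alpha$-isomorphic if there is a bijection $f:X\to Y$ such that $f^{-1}(A)\in\mathbf{\Sigma}^0_\alpha(X)$ for all $A\in\mathbf{\Sigma}^0_\alpha(Y)$ and $f(B)\in\mathbf{\Sigma}^0_\alpha(Y)$ for all $B\in\mathbf{\Sigma}^0_\alpha(X)$. *)

(* Defs.v *)
From mathcomp Require Import all_boot all_order.
From mathcomp Require Import boolp classical_sets functions cardinality topology.
Set Implicit Arguments. Unset Strict Implicit. Unset Printing Implicit Defensive.
Local Open Scope classical_set_scope.

(* ω1 as an abstract structure: an uncountable strict well-order in which
   every element has only countably many predecessors.  Any two such
   structures are order-isomorphic, so these are exactly (copies of) the
   countable ordinals α < ω1. *)
Record Omega1 := {
  ord :> Type;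
  olt : ord -> ord -> Prop;
  olt_wf : well_founded olt;
  olt_trans : forall a b c, olt a b -> olt b c -> olt a c;
  olt_total : forall a b, olt a b \/ a = b \/ olt b a;
  olt_pred_countable : forall a, countable [set b | olt b a];
  ord_uncountable : ~ countable [set: ord]
}.

Section Ordinals.
Variable W : Omega1.
Local Notation lt := (olt (o:=W)).

Definition ord_zero (a : W) := forall b, ~ lt b a.
Definition succ_of (b a : W) := lt b a /\ forall c, lt c a -> c = b \/ lt c b.
Definition ord_limit (a : W) := ~ ord_zero a /\ ~ exists b, succ_of b a.
Definition ord_one (a : W) := exists z, ord_zero z /\ succ_of z a.
Definition ord_two (a : W) := exists o, ord_one o /\ succ_of o a.
Definition ord_le (a b : W) := a = b \/ lt a b.

(* a = λ + n (λ zero or limit) is even iff n is even *)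
Inductive ord_even : W -> Prop :=
| even_base a : ord_zero a \/ ord_limit a -> ord_even a
| even_succ a b : succ_of b a -> ord_odd b -> ord_even a
with ord_odd : W -> Prop :=
| odd_succ a b : succ_of b a -> ord_even b -> ord_odd a.

Definition r_ord (a : W) : nat := if `[< ord_even a >] then 0 else 1.

Definition Sigma_step (X : topologicalType) (a : W)
  (rec : forall b, lt b a -> set (set X)) : set (set X) :=
  if `[< ord_zero a >] then [set set0]
  else if `[< ord_one a >] then [set A | open A]
  else if `[< ord_two a >] then
    [set A | exists U V : nat -> set X,
        (forall n, open (U n) /\ open (V n)) /\ A = \bigcup_n (U n `\` V n)]
  else
    [set A | exists B : nat -> set X,
        (forall n, exists b (h : lt b a), rec b h (~` B n)) /\ A = \bigcup_n B n].

Definition Sigma0 (X : topologicalType) : W -> set (set X) :=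
  Fix (@olt_wf W) (fun _ => set (set X)) (@Sigma_step X).

Definition Diff (X : Type) (beta : W) (L : set (set X)) : set (set X) :=
  [set S | exists A : W -> set X,
     (forall g, lt g beta -> L (A g)) /\
     S = \bigcup_(g in [set g | lt g beta /\ r_ord g <> r_ord beta])
           (A g `\` \bigcup_(d in [set d | lt d g]) A d)].

Definition diff_collapses (X : topologicalType) (theta : W) :=
  exists beta : W, Diff beta (@Sigma0 X theta) = setC @` Diff beta (@Sigma0 X theta).

Definition Sigma_isomorphic (alpha : W) (X Y : topologicalType) :=
  exists f : X -> Y, bijective f /\
    (forall A, @Sigma0 Y alpha A -> @Sigma0 X alpha (f @^-1` A)) /\
    (forall B, @Sigma0 X alpha B -> @Sigma0 Y alpha (f @` B)).

End Ordinals.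

(* Main.v *)
Require Import Defs.
From mathcomp Require Import all_boot all_order.
From mathcomp Require Import boolp classical_sets functions cardinality topology.
Set Implicit Arguments. Unset Strict Implicit. Unset Printing Implicit Defensive.
Local Open Scope classical_set_scope.

Section S.
Variable W : Omega1.
Local Notation lt := (olt (o:=W)).



Lemma lt_irr (a : W) : ~ lt a a.
Proof.
elim: (olt_wf a) => x _ IH h; exact: (IH x h h).
Qed.

Lemma wf_min (P : W -> Prop) a : P a -> exists m, P m /\ forall c, P c -> ~ lt c m.
Proof.
elim: (olt_wf a) => x _ IH Px.
case: (pselect (exists c, P c /\ lt c x)) => [[c [Pc cx]]|N].
  exact: IH cx Pc.
exists x; split => // c Pc cx; apply: N; by exists c.
Qed.

Lemma succ_exists (x a : W) : lt x a -> exists s, succ_of x s /\ ord_le s a.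
Proof.
move=> xa; have [m [xm mmin]] := wf_min (P := fun c => lt x c) xa.
exists m; split; first split => //.
  move=> c cm; case: (olt_total c x) => [h|[h|h]]; [by right|by left|].
  by exfalso; apply: (mmin c).
case: (olt_total m a) => [h|[h|h]]; [by right|by left|].
by exfalso; apply: (mmin a).
Qed.

Lemma one_nz (a : W) : ord_one a -> ~ ord_zero a.
Proof. by move=> [z [_ [za _]]] h; apply: (h z). Qed.

Lemma succ_nz_not_one (b a : W) : succ_of b a -> ~ ord_zero b -> ~ ord_one a.
Proof.
move=> [ba _] nb [z [zz [_ H]]].
case: (H b ba) => [E|bz]; first by subst. by apply: (zz b).
Qed.

Lemma two_not_one (a : W) : ord_two a -> ~ ord_one a.
Proof. move=> [o [o1 so]]; apply: (succ_nz_not_one so); exact: one_nz. Qed.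

Lemma two_nz (a : W) : ord_two a -> ~ ord_zero a.
Proof. by move=> [o [_ [oa _]]] h; apply: (h o). Qed.

Lemma lt_one (b a : W) : ord_one a -> lt b a -> ord_zero b.
Proof.
move=> [z [zz [_ H]]] ba; case: (H b ba) => [->//|bz]; by exfalso; apply: (zz b).
Qed.

Lemma lt_two (b a : W) : ord_two a -> lt b a -> ~ ord_zero b -> ord_one b.
Proof.
move=> [o [o1 [_ H]]] ba nb; case: (H b ba) => [->//|bo].
by exfalso; apply: nb; apply: lt_one o1 bo.
Qed.

Lemma Sigma0E (X : topologicalType) (a : W) :
  @Sigma0 W X a = @Sigma_step W X a (fun b _ => @Sigma0 W X b).
Proof.
rewrite /Sigma0 Fix_eq // => x f g Hfg.
have -> // : f = g.
apply: functional_extensionality_dep => y; apply: functional_extensionality_dep => p.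
exact: Hfg.
Qed.

Lemma S0_zero X (a : W) : ord_zero a -> @Sigma0 W X a = [set set0].
Proof. by move=> h; rewrite Sigma0E /Sigma_step asboolT. Qed.

Lemma S0_one X (a : W) : ord_one a -> @Sigma0 W X a = [set A | open A].
Proof.
move=> h; rewrite Sigma0E /Sigma_step asboolF ?asboolT //; exact: one_nz.
Qed.

Lemma S0_two X (a : W) : ord_two a -> @Sigma0 W X a =
    [set A | exists U V : nat -> set X,
        (forall n, open (U n) /\ open (V n)) /\ A = \bigcup_n (U n `\` V n)].
Proof.
move=> h; have n1 := two_not_one h; have n0 := two_nz h.
by rewrite Sigma0E /Sigma_step asboolF // asboolF // asboolT.
Qed.

Lemma S0_high X (a : W) : ~ ord_zero a -> ~ ord_one a -> ~ ord_two a ->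
  @Sigma0 W X a = [set A | exists B : nat -> set X,
        (forall n, exists b, lt b a /\ @Sigma0 W X b (~` B n)) /\ A = \bigcup_n B n].
Proof.
move=> h1 h2 h3; rewrite Sigma0E /Sigma_step asboolF ?asboolF ?asboolF //.
apply/seteqP; split => A [B [HB ->]]; exists B; split => // n.
  by have [b [h hb]] := HB n; exists b; split.
by have [b [h hb]] := HB n; exists b; exists h.
Qed.

Lemma mono_S0 (X : topologicalType) (b a : W) S :
  lt b a -> ~ ord_zero b -> @Sigma0 W X b S -> @Sigma0 W X a S.
Proof.
move=> ba nb hS.
case: (pselect (ord_zero a)) => [za|na]; first by exfalso; apply: (za b).
case: (pselect (ord_one a)) => [oa|n1a]; first by exfalso; apply/nb/(lt_one oa ba).
case: (pselect (ord_two a)) => [ta|n2a].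
  have ob := lt_two ta ba nb; rewrite S0_one // in hS.
  rewrite S0_two //; exists (fun=> S), (fun=> set0); split.
    by move=> n; split => //; exact: open0.
  apply/seteqP; split => x /=; first by move=> Sx; exists 0%N => //; split.
  by move=> [n _ [Sx _]].
rewrite S0_high //.
case: (pselect (ord_one b)) => [ob|n1b].
  have [s [bs sa]] := succ_exists ba.
  have ts : ord_two s by exists b.
  have sa' : lt s a by case: sa => // E; subst.
  rewrite S0_one // in hS.
  exists (fun=> S); split.
    move=> n; exists s; split => //; rewrite S0_two //.
    exists (fun=> setT), (fun=> S); split; first by move=> _; split => //; exact: openT.
    apply/seteqP; split => x /=; first by move=> nS; exists 0%N => //; split.
    by move=> [k _ [_ nS]].
  apply/seteqP; split => x /=; first by move=> Sx; exists 0%N => //.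
  by move=> [n _ Sx].
case: (pselect (ord_two b)) => [tb|n2b].
  rewrite S0_two // in hS; case: hS => U [V [oUV ->]].
  exists (fun n => U n `\` V n); split => //.
  move=> n; exists b; split => //; rewrite S0_two //.
  exists (fun k => if k is 0%N then setT else V n),
         (fun k => if k is 0%N then U n else set0); split.
    by case=> [|k]; split; (try exact: openT); (try exact: open0); apply oUV.
  apply/seteqP; split => x /=.
    move=> h; case: (pselect (U n x)) => Ux.
      case: (pselect (V n x)) => Vx; last by exfalso; apply: h; split.
      by exists 1%N => //; split.
    by exists 0%N => //; split.
  move=> [[|k] _ /=]; first by move=> [_ nU] [].
  by move=> [Vx _] [].
rewrite S0_high // in hS; case: hS => B [HB ->].
exists B; split => // n; have [c [cb hc]] := HB n.
by exists c; split => //; apply: olt_trans cb ba.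
Qed.

Lemma lift_S0 (X Y : topologicalType) (h : X -> Y) (alpha : W) :
  ~ ord_zero alpha ->
  (forall A, @Sigma0 W Y alpha A -> @Sigma0 W X alpha (h @^-1` A)) ->
  forall c, ord_le alpha c ->
  forall A, @Sigma0 W Y c A -> @Sigma0 W X c (h @^-1` A).
Proof.
move=> na H c; elim: (olt_wf c) => {}c _ IH [<-//|ac] A hA.
have nc : ~ ord_zero c by move=> z; apply: (z alpha).
case: (pselect (ord_one c)) => [oc|n1c]; first by exfalso; apply/na/(lt_one oc ac).
case: (pselect (ord_two c)) => [tc|n2c].
  have oa := lt_two tc ac na.
  have Ho : forall A, open A -> open (h @^-1` A).
    by move=> B oB; have := H B; rewrite !S0_one //; apply.
  rewrite S0_two // in hA; case: hA => U [V [oUV ->]].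
  rewrite S0_two //; exists (fun n => h @^-1` U n), (fun n => h @^-1` V n); split.
    by move=> n; split; apply: Ho; apply oUV.
  by apply/seteqP; split => x [n _ hn]; exists n.
rewrite S0_high // in hA; case: hA => B [HB ->].
rewrite S0_high //; exists (fun n => h @^-1` B n); split; last first.
  by apply/seteqP; split => x [n _ hn]; exists n.
move=> n; have [b [bc hb]] := HB n.
suff : exists b0, lt b0 c /\ @Sigma0 W X b0 (h @^-1` (~` B n)) by [].
case: (pselect (ord_zero b)) => [zb|nzb].
  exists b; split => //; rewrite S0_zero // in hb; rewrite S0_zero //.
  by rewrite /= in hb; rewrite hb preimage_set0.
case: (olt_total b alpha) => [ba|bale].
  exists alpha; split => //; apply: H; exact: mono_S0 ba nzb hb.
exists b; split => //; apply: IH => //.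
by case: bale => [->|]; [left|right].
Qed.

Lemma Diff_pre (X Y : Type) (h : X -> Y) (beta : W) (L : set (set Y))
  (L' : set (set X)) S :
  (forall A, L A -> L' (h @^-1` A)) -> Diff beta L S -> Diff beta L' (h @^-1` S).
Proof.
move=> H [A [HA ->]]; exists (fun g => h @^-1` A g); split.
  by move=> g gb; apply: H; apply: HA.
by apply/seteqP; split => x /= [g gin [Ag nU]]; exists g.
Qed.
End S.

Theorem lemma4p4 (W : Omega1) (alpha theta : W) (X Y : topologicalType) :
  ~ ord_zero alpha -> ord_le alpha theta ->
  Sigma_isomorphic alpha X Y ->
  ~ diff_collapses X theta -> ~ diff_collapses Y theta.
Proof.
move=> na le [f [[g fK gK] [Hpre Himg]]] nX [beta E]; apply: nX; exists beta.
have Hg : forall B, @Sigma0 W X alpha B -> @Sigma0 W Y alpha (g @^-1` B).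
  move=> B hB; have -> : g @^-1` B = f @` B; last exact: Himg.
  apply/seteqP; split => x /=.
    by move=> Bg; exists (g x) => //; rewrite gK.
  by move=> [b Bb <-]; rewrite fK.
have Hf' := lift_S0 na Hpre le.
have Hg' := lift_S0 na Hg le.
apply/seteqP; split => S.
  move=> hS; have := Diff_pre Hg' hS; rewrite E => -[T hT TE].
  exists (f @^-1` T); first exact: Diff_pre Hf' hT.
  rewrite preimage_setC TE; apply/seteqP; split => x /=; by rewrite fK.
move=> [T hT <-].
have h1 := Diff_pre Hg' hT.
have h2 : Diff beta (@Sigma0 W Y theta) (~` (g @^-1` T)) by rewrite E; exists (g @^-1` T).
have := Diff_pre Hf' h2; congr Diff; apply/seteqP; split => x /=; by rewrite fK.
Qed.
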